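(* Under the assumptions $\alpha=2$, the far-destination approximation (all relay–destination distances replaced by $d$), and conditioned on $N\ge 1$, the energy harvesting decode-and-forward protocol with a uniformly randomly chosen relay achieves diversity gain $2$: $$-\lim_{P\to\infty}\frac{\log \mathcal{P}_1(P)}{\log P}=2,\qquad \mathcal{P}_1(P)=\mathcal{P}\big(x_0+\eta y_i(x_i-\epsilon)<\epsilon,\ x_i>\epsilon\big)+\mathcal{P}\big(x_0<\epsilon,\ x_i<\epsilon\big).$$
   Context: Source at origin, destination at distance $d>0$; relays form a homogeneous Poisson point process of intensity $\lambda$ in the disc $\mathcal D$ of radius $R_{\mathcal D}$ centred at the source; the chosen relay is uniform in $\mathcal D$ at distance $d_i$ from the source. Fading $h_d,h_i,g_i$ independent $\mathcal{CN}(0,1)$; $x_0=|h_d|^2/(1+d^2)$, $x_i=|h_i|^2/(1+d_i^2)$, $y_i=|g_i|^2/(1+d^2)$. $\tau=2^{2R}-1$ for target rate $R>0$, $\epsilon=\tau/P$ with transmit power $P$, $\eta\in(0,1]$. Relay decodes iff $x_i>\epsilon$, transmits with power $\eta(Px_i-\tau)$; outage when the combined SNR $P(x_0+\eta y_i(x_i-\epsilon))<\tau$. *)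

(* Defs.v *)
From Stdlib Require Import Reals ClassicalEpsilon.
Open Scope R_scope.

Definition is_RInt (f : R -> R) (a b v : R) : Prop :=
  exists pr : Riemann_integrable f a b, RiemannInt pr = v.

(* total integral operator (value is meaningful when f is integrable) *)
Definition RInt (f : R -> R) (a b : R) : R :=
  epsilon (inhabits 0) (fun v => is_RInt f a b v).

Definition is_RInt_0_inf (f : R -> R) (v : R) : Prop :=
  (forall T, 0 <= T -> exists w, is_RInt f 0 T w) /\
  (forall e, 0 < e -> exists M, forall T, M <= T -> Rabs (RInt f 0 T - v) < e).

Definition RInt_0_inf (f : R -> R) : R :=
  epsilon (inhabits 0) (fun v => is_RInt_0_inf f v).

Definition ind_lt (u w : R) : R := if Rlt_dec u w then 1 else 0.

(* Randomness: relay distance r has density 2r/RD^2 on [0,RD];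
   given r, x_i ~ Exp(rate 1+r^2); x_0, y_i ~ Exp(rate 1+d^2); all independent
   (since |h|^2 ~ Exp(1) for h ~ CN(0,1)).
   eps = tau / P.
   P_1 = P(x0 + eta*yi*(xi - eps) < eps, xi > eps) + P(x0 < eps, xi < eps). *)
Definition P1 (d RD eta tau P : R) : R :=
  let eps := tau / P in
  let a := 1 + d ^ 2 in
  RInt (fun r =>
     (2 * r / RD ^ 2) *
     (let b := 1 + r ^ 2 in
        RInt_0_inf (fun x => b * exp (- b * x) *
          RInt_0_inf (fun y => a * exp (- a * y) *
            RInt_0_inf (fun z => a * exp (- a * z) *
               (ind_lt eps x * ind_lt (z + eta * y * (x - eps)) eps))))
      + RInt_0_inf (fun x => b * exp (- b * x) *
            RInt_0_inf (fun z => a * exp (- a * z) *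
               (ind_lt x eps * ind_lt z eps)))))
   0 RD.

(* Main.v *)
Require Import Defs.
From Stdlib Require Import Reals Lra Psatz ClassicalEpsilon FunctionalExtensionality.
From Coquelicot Require Import Coquelicot.
Open Scope R_scope.

Lemma squeeze_ex_RInt (f : R -> R) (a b : R) : a < b ->
  (forall e, 0 < e -> exists g h : R -> R, ex_RInt g a b /\ ex_RInt h a b /\
     (forall t, a <= t <= b -> g t <= f t <= h t) /\ RInt h a b - RInt g a b < e) ->
  ex_RInt f a b.
Proof.
  intros Hab H.
  unfold ex_RInt, is_RInt.
  cut (exists y : R, filterlim (fun ptd : SF_seq => scal (sign (b - a)) (Riemann_sum f ptd))
      (Riemann_fine a b) (locally y)).
  { intros [y Hy]. exists y. exact Hy. }
  apply (proj1 (filterlim_locally_cauchy (F:=Riemann_fine a b) (fun ptd => scal (sign (b-a)) (Riemann_sum f ptd)))).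
  intros eps.
  destruct (H (eps/3)) as [g [h [Hg [Hh [Hb Hd]]]]].
  { destruct eps; simpl; lra. }
  assert (Hd3 : 0 < eps / 3) by (destruct eps; simpl; lra).
  pose proof (RInt_correct g a b Hg) as Ig.
  pose proof (RInt_correct h a b Hh) as Ih.
  unfold is_RInt in Ig, Ih.
  pose proof (proj1 (filterlim_locally _ _) Ig (mkposreal _ Hd3)) as Ig'. clear Ig.
  pose proof (proj1 (filterlim_locally _ _) Ih (mkposreal _ Hd3)) as Ih'. clear Ih.
  simpl in Ig', Ih'.
  set (D := fun ptd : SF_seq => pointed_subdiv ptd /\ SF_h ptd = Rmin a b /\
            seq.last (SF_h ptd) (SF_lx ptd) = Rmax a b).
  assert (HD : Riemann_fine a b D).
  { unfold Riemann_fine, within. apply filter_forall. auto. }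
  exists (fun ptd => D ptd /\ ball (RInt g a b) (eps/3) (scal (sign (b - a)) (Riemann_sum g ptd))
          /\ ball (RInt h a b) (eps/3) (scal (sign (b - a)) (Riemann_sum h ptd))).
  split.
  { apply filter_and; [exact HD|]. apply filter_and; assumption. }
  intros u v [Du [Gu Hu]] [Dv [Gv Hv]].
  destruct Du as [Pu [hu lu]]. destruct Dv as [Pv [hv lv]].
  rewrite sign_eq_1 in * by lra.
  change (Rabs (scal 1 (Riemann_sum f v) - scal 1 (Riemann_sum f u)) < eps).
  change (Rabs (scal 1 (Riemann_sum g u) - RInt g a b) < eps/3) in Gu.
  change (Rabs (scal 1 (Riemann_sum g v) - RInt g a b) < eps/3) in Gv.
  change (Rabs (scal 1 (Riemann_sum h u) - RInt h a b) < eps/3) in Hu.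
  change (Rabs (scal 1 (Riemann_sum h v) - RInt h a b) < eps/3) in Hv.
  unfold scal in Gu,Gv,Hu,Hv|-*; simpl in Gu,Gv,Hu,Hv|-*; unfold mult in Gu,Gv,Hu,Hv|-*; simpl in Gu,Gv,Hu,Hv|-*.
  rewrite !Rmult_1_l in Gu,Gv,Hu,Hv|-*.
  assert (Hmm : Rmin a b = a /\ Rmax a b = b).
  { split; [apply Rmin_left|apply Rmax_right]; lra. }
  destruct Hmm as [Hm1 Hm2].
  assert (R1 : Riemann_sum g u <= Riemann_sum f u).
  { apply Riemann_sum_le; auto. intros t Ht. rewrite lu, hu, Hm1, Hm2 in Ht. apply Hb; lra. }
  assert (R2 : Riemann_sum f u <= Riemann_sum h u).
  { apply Riemann_sum_le; auto. intros t Ht. rewrite lu, hu, Hm1, Hm2 in Ht. apply Hb; lra. }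
  assert (R3 : Riemann_sum g v <= Riemann_sum f v).
  { apply Riemann_sum_le; auto. intros t Ht. rewrite lv, hv, Hm1, Hm2 in Ht. apply Hb; lra. }
  assert (R4 : Riemann_sum f v <= Riemann_sum h v).
  { apply Riemann_sum_le; auto. intros t Ht. rewrite lv, hv, Hm1, Hm2 in Ht. apply Hb; lra. }
  apply Rabs_def1; apply Rabs_def2 in Gu, Gv, Hu, Hv; lra.
Qed.

Lemma ex_RInt_ext_open (f g : R -> R) a b : a <= b ->
  (forall x, a < x < b -> f x = g x) -> ex_RInt f a b -> ex_RInt g a b.
Proof.
  intros Hab H. apply ex_RInt_ext. intros x Hx.
  rewrite Rmin_left, Rmax_right in Hx by lra. auto.
Qed.

Lemma RInt_ext_open (f g : R -> R) a b : a <= b ->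
  (forall x, a < x < b -> f x = g x) -> RInt f a b = RInt g a b.
Proof.
  intros Hab H. apply RInt_ext. intros x Hx.
  rewrite Rmin_left, Rmax_right in Hx by lra. auto.
Qed.

Lemma RInt_cst (c a b : R) : RInt (fun _ => c) a b = (b - a) * c.
Proof. rewrite RInt_const. reflexivity. Qed.

Lemma RInt_Chasles_R (f : R -> R) a b c : ex_RInt f a b -> ex_RInt f b c ->
  RInt f a c = RInt f a b + RInt f b c.
Proof. intros. rewrite <- (RInt_Chasles f a b c); auto. Qed.

Definition HypB (f W : R -> R) (a b : R) : Prop :=
  forall u v, a <= u -> u <= v -> v <= b ->
   exists lo hi, (forall t, u <= t <= v -> lo <= f t <= hi) /\ hi - lo <= W v - W u.

Lemma step_approx (f W : R -> R) (n : nat) : forall a b, a <= b -> HypB f W a b ->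
  exists g h, ex_RInt g a b /\ ex_RInt h a b /\ (forall t, a <= t <= b -> g t <= f t <= h t)
   /\ RInt h a b - RInt g a b <= (b - a) * (W b - W a) / (INR n + 1).
Proof.
  induction n as [|n IH]; intros a b Hab HB.
  - destruct (HB a b) as [lo [hi [H1 H2]]]; try lra.
    exists (fun _ => lo), (fun _ => hi). split; [apply ex_RInt_const|].
    split; [apply ex_RInt_const|]. split; [exact H1|].
    rewrite !RInt_cst. simpl. unfold Rdiv. rewrite Rplus_0_l, Rinv_1, Rmult_1_r.
    nra.
  - set (c := a + (b - a) / (INR n + 2)).
    assert (Hn : 0 < INR n + 1) by (pose proof (pos_INR n); lra).
    assert (Hc1 : a <= c).
    { unfold c. assert (0 <= (b - a) / (INR n + 2)) by (apply Rdiv_le_0_compat; lra). lra. }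
    assert (Hc2 : c <= b).
    { unfold c. assert ((b - a) / (INR n + 2) <= b - a).
      { apply Rmult_le_reg_r with (INR n + 2); [lra|]. unfold Rdiv.
        rewrite Rmult_assoc, Rinv_l by lra. nra. }
      lra. }
    destruct (HB a c) as [lo [hi [H1 H2]]]; try lra.
    destruct (IH c b Hc2) as [g' [h' [Hg' [Hh' [Hb' Hd']]]]].
    { intros u v Hu Huv Hv. apply HB; lra. }
    exists (fun t => if Rlt_dec t c then lo else g' t),
           (fun t => if Rlt_dec t c then hi else h' t).
    assert (E1 : ex_RInt (fun t => if Rlt_dec t c then lo else g' t) a c).
    { apply ex_RInt_ext_open with (fun _ => lo); auto; [|apply ex_RInt_const].
      intros x Hx. destruct (Rlt_dec x c); lra. }
    assert (E2 : ex_RInt (fun t => if Rlt_dec t c then lo else g' t) c b).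
    { apply ex_RInt_ext_open with g'; auto.
      intros x Hx. destruct (Rlt_dec x c); [lra|auto]. }
    assert (E3 : ex_RInt (fun t => if Rlt_dec t c then hi else h' t) a c).
    { apply ex_RInt_ext_open with (fun _ => hi); auto; [|apply ex_RInt_const].
      intros x Hx. destruct (Rlt_dec x c); lra. }
    assert (E4 : ex_RInt (fun t => if Rlt_dec t c then hi else h' t) c b).
    { apply ex_RInt_ext_open with h'; auto.
      intros x Hx. destruct (Rlt_dec x c); [lra|auto]. }
    split; [apply ex_RInt_Chasles with c; auto|].
    split; [apply ex_RInt_Chasles with c; auto|].
    split.
    { intros t Ht. destruct (Rlt_dec t c).
      - apply H1; lra.
      - apply Hb'; lra. }
    rewrite (RInt_Chasles_R _ a c b) by auto.
    rewrite (RInt_Chasles_R _ a c b) by auto.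
    rewrite (RInt_ext_open (fun t => if Rlt_dec t c then lo else g' t) (fun _ => lo) a c) by (try lra; intros x Hx; destruct (Rlt_dec x c); lra).
    rewrite (RInt_ext_open (fun t => if Rlt_dec t c then hi else h' t) (fun _ => hi) a c) by (try lra; intros x Hx; destruct (Rlt_dec x c); lra).
    rewrite (RInt_ext_open (fun t => if Rlt_dec t c then lo else g' t) g' c b) by (first [lra | intros x Hx; destruct (Rlt_dec x c); [lra|auto]]).
    rewrite (RInt_ext_open (fun t => if Rlt_dec t c then hi else h' t) h' c b) by (first [lra | intros x Hx; destruct (Rlt_dec x c); [lra|auto]]).
    rewrite !RInt_cst.
    rewrite S_INR.
    assert (Ec1 : c - a = (b - a) / (INR n + 1 + 1)) by (unfold c; field; lra).
    assert (Ec2 : (b - c) / (INR n + 1) = (b - a) / (INR n + 1 + 1)) by (unfold c; field; lra).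
    assert (Hd'' : RInt h' c b - RInt g' c b <= (b - a) / (INR n + 1 + 1) * (W b - W c)).
    { rewrite <- Ec2. unfold Rdiv in *. 
      replace ((b - c) * / (INR n + 1) * (W b - W c)) with ((b - c) * (W b - W c) * / (INR n + 1)) by ring.
      exact Hd'. }
    assert (Hca : (c - a) * hi - (c - a) * lo <= (c - a) * (W c - W a)) by nra.
    replace ((b - a) * (W b - W a) / (INR n + 1 + 1)) with
      ((c - a) * (W c - W a) + (b - a) / (INR n + 1 + 1) * (W b - W c)) by (rewrite Ec1; field; lra).
    lra.
Qed.

Lemma ex_RInt_gen (f W : R -> R) a b : a <= b -> HypB f W a b -> ex_RInt f a b.
Proof.
  intros Hab HB. destruct (Req_dec a b) as [->|Hne]; [apply ex_RInt_point|].
  apply squeeze_ex_RInt; [lra|]. intros e He.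
  destruct (HB a b) as [lo [hi [H1 H2]]]; try lra.
  assert (HW : 0 <= W b - W a) by (specialize (H1 a); lra).
  destruct (INR_unbounded ((b - a) * (W b - W a) / e)) as [n Hn].
  destruct (step_approx f W n a b Hab HB) as [g [h [Hg [Hh [Hb Hd]]]]].
  exists g, h. repeat split; auto; try apply Hb; auto.
  eapply Rle_lt_trans; [exact Hd|].
  assert (Hn1 : 0 < INR n + 1) by (pose proof (pos_INR n); lra).
  apply Rmult_lt_reg_r with (INR n + 1); [lra|]. unfold Rdiv.
  rewrite Rmult_assoc, Rinv_l, Rmult_1_r by lra.
  assert ((b - a) * (W b - W a) < e * INR n).
  { assert (e * INR n > e * ((b - a) * (W b - W a) / e)) by (apply Rmult_gt_compat_l; lra).
    replace (e * ((b - a) * (W b - W a) / e)) with ((b - a) * (W b - W a)) in H by (field; lra).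
    lra. }
  nra.
Qed.

Lemma ex_RInt_dec (f : R -> R) a b : a <= b ->
  (forall u v, a <= u -> u <= v -> v <= b -> f v <= f u) -> ex_RInt f a b.
Proof.
  intros Hab H. apply (ex_RInt_gen f (fun t => - f t)); auto.
  intros u v Hu Huv Hv. exists (f v), (f u). split; [|lra].
  intros t Ht. split; apply H; lra.
Qed.

Lemma ex_RInt_inc (f : R -> R) a b : a <= b ->
  (forall u v, a <= u -> u <= v -> v <= b -> f u <= f v) -> ex_RInt f a b.
Proof.
  intros Hab H. apply (ex_RInt_gen f f); auto.
  intros u v Hu Huv Hv. exists (f u), (f v). split; [|lra].
  intros t Ht. split; apply H; lra.
Qed.

Lemma ex_RInt_prod (p q : R -> R) a b P Q : a <= b ->
  (forall u v, a <= u -> u <= v -> v <= b -> p u <= p v) ->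
  (forall u v, a <= u -> u <= v -> v <= b -> q v <= q u) ->
  (forall t, a <= t <= b -> 0 <= p t <= P) ->
  (forall t, a <= t <= b -> 0 <= q t <= Q) ->
  ex_RInt (fun t => p t * q t) a b.
Proof.
  intros Hab Hp Hq Bp Bq.
  apply (ex_RInt_gen _ (fun t => Q * p t - P * q t)); auto.
  intros u v Hu Huv Hv. exists (p u * q v), (p v * q u). split.
  - intros t Ht.
    assert (p u <= p t) by (apply Hp; lra). assert (p t <= p v) by (apply Hp; lra).
    assert (q t <= q u) by (apply Hq; lra). assert (q v <= q t) by (apply Hq; lra).
    destruct (Bp u) as [? ?]; try lra. destruct (Bq v) as [? ?]; try lra.
    destruct (Bp t) as [? ?]; try lra. destruct (Bq t) as [? ?]; try lra.
    split; nra.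
  - assert (p u <= p v) by (apply Hp; lra). assert (q v <= q u) by (apply Hq; lra).
    destruct (Bp u) as [? ?]; try lra. destruct (Bq u) as [? ?]; try lra.
    destruct (Bp v) as [? ?]; try lra. destruct (Bq v) as [? ?]; try lra.
    nra.
Qed.

Lemma ex_RInt_jump (f : R -> R) a b c M : a <= b ->
  (forall t, a <= t <= b -> t <= c -> f t = 0) ->
  (forall u v, a <= u -> c < u -> u <= v -> v <= b -> f v <= f u) ->
  (forall t, a <= t <= b -> 0 <= f t <= M) ->
  ex_RInt f a b.
Proof.
  intros Hab H0 Hd Hb.
  apply (ex_RInt_gen f (fun t => if Rle_dec t c then - 2 * M else - f t)); auto.
  intros u v Hu Huv Hv.
  assert (HM : 0 <= M) by (destruct (Hb a); lra).
  destruct (Rle_dec v c) as [Hvc|Hvc].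
  - exists 0, 0. split; [|destruct (Rle_dec u c); lra].
    intros t Ht. rewrite H0 by lra. lra.
  - destruct (Rle_dec u c) as [Huc|Huc].
    + exists 0, M. split.
      * intros t Ht. destruct (Hb t); lra.
      * destruct (Hb v); lra.
    + exists (f v), (f u). split; [|lra].
      intros t Ht. split; apply Hd; lra.
Qed.

Lemma Defs_RInt_eq (f : R -> R) a b : ex_RInt f a b -> Defs.RInt f a b = RInt f a b.
Proof.
  intros H.
  assert (E : exists v, Defs.is_RInt f a b v).
  { exists (RInt f a b). exists (ex_RInt_Reals_0 f a b H).
    symmetry. apply RInt_Reals. }
  unfold Defs.RInt.
  pose proof (epsilon_spec (inhabits 0) (fun v => Defs.is_RInt f a b v) E) as [pr Hpr].
  rewrite <- Hpr. symmetry. apply RInt_Reals.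
Qed.

Definition conv_inf (f : R -> R) (v : R) : Prop :=
  (forall T, 0 <= T -> ex_RInt f 0 T) /\
  (forall e, 0 < e -> exists M, forall T, M <= T -> Rabs (RInt f 0 T - v) < e).

Lemma conv_inf_unique f v w : conv_inf f v -> conv_inf f w -> v = w.
Proof.
  intros [_ H1] [_ H2].
  apply Rminus_diag_uniq. apply Rabs_eq_0.
  destruct (Rle_lt_or_eq_dec 0 (Rabs (v - w)) (Rabs_pos _)) as [Hp|Hp]; [|auto].
  exfalso. set (e := Rabs (v - w) / 2).
  destruct (H1 e) as [M1 HM1]; [unfold e; lra|].
  destruct (H2 e) as [M2 HM2]; [unfold e; lra|].
  specialize (HM1 (Rmax M1 M2) (Rmax_l _ _)). specialize (HM2 (Rmax M1 M2) (Rmax_r _ _)).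
  assert (Rabs (v - w) <= Rabs (RInt f 0 (Rmax M1 M2) - v) + Rabs (RInt f 0 (Rmax M1 M2) - w)).
  { replace (v - w) with (-(RInt f 0 (Rmax M1 M2) - v) + (RInt f 0 (Rmax M1 M2) - w)) by ring.
    eapply Rle_trans; [apply Rabs_triang|]. rewrite Rabs_Ropp. lra. }
  unfold e in *. lra.
Qed.

Lemma conv_inf_val f v : conv_inf f v -> RInt_0_inf f = v.
Proof.
  intros [Hex Hl].
  assert (D : is_RInt_0_inf f v).
  { split.
    - intros T HT. exists (RInt f 0 T). exists (ex_RInt_Reals_0 f 0 T (Hex T HT)).
      symmetry. apply RInt_Reals.
    - intros e He. destruct (Hl e He) as [M HM]. exists (Rmax M 0). intros T HT.
      rewrite Defs_RInt_eq. apply HM. eapply Rle_trans; [apply Rmax_l|exact HT].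
      apply Hex. eapply Rle_trans; [apply Rmax_r|exact HT]. }
  unfold RInt_0_inf.
  pose proof (epsilon_spec (inhabits 0) (fun v => is_RInt_0_inf f v) (ex_intro _ v D)) as E.
  set (w := epsilon _ _) in *.
  destruct E as [E1 E2]. destruct D as [D1 D2].
  apply (conv_inf_unique f); split; auto.
  - intros e He. destruct (E2 e He) as [M HM]. exists (Rmax M 0). intros T HT.
    rewrite <- Defs_RInt_eq. apply HM. eapply Rle_trans; [apply Rmax_l|exact HT].
    apply Hex. eapply Rle_trans; [apply Rmax_r|exact HT].
Qed.

Lemma ex_RInt_sub (f : R -> R) a b c d : a <= c -> c <= d -> d <= b ->
  ex_RInt f a b -> ex_RInt f c d.
Proof.
  intros H1 H2 H3 H.
  apply (ex_RInt_Chasles_1 (V:=R_CompleteNormedModule) f c d b); [lra|].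
  apply (ex_RInt_Chasles_2 (V:=R_CompleteNormedModule) f a c b); [lra|exact H].
Qed.

Lemma RInt_mono_T (f : R -> R) T1 T2 : 0 <= T1 <= T2 -> ex_RInt f 0 T2 ->
  (forall x, T1 <= x <= T2 -> 0 <= f x) -> RInt f 0 T1 <= RInt f 0 T2.
Proof.
  intros HT Hex Hp.
  assert (E1 : ex_RInt f 0 T1) by (apply (ex_RInt_sub f 0 T2); auto; lra).
  assert (E2 : ex_RInt f T1 T2) by (apply (ex_RInt_sub f 0 T2); auto; lra).
  rewrite (RInt_Chasles_R f 0 T1 T2) by auto.
  assert (0 <= RInt f T1 T2) by (apply RInt_ge_0; try lra; auto; intros; apply Hp; lra).
  lra.
Qed.

Lemma mct (f : R -> R) C : (forall T, 0 <= T -> ex_RInt f 0 T) ->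
  (forall x, 0 <= x -> 0 <= f x) -> (forall T, 0 <= T -> RInt f 0 T <= C) ->
  exists v, conv_inf f v /\ 0 <= v /\ v <= C /\ (forall T, 0 <= T -> RInt f 0 T <= v).
Proof.
  intros Hex Hp HC.
  set (E := fun y => exists T, 0 <= T /\ y = RInt f 0 T).
  assert (Hb : bound E) by (exists C; intros y [T [HT ->]]; auto).
  assert (Hne : exists y, E y) by (exists (RInt f 0 0); exists 0; split; [lra|auto]).
  destruct (completeness E Hb Hne) as [v [Hub Hlub]].
  assert (Hle : forall T, 0 <= T -> RInt f 0 T <= v) by (intros T HT; apply Hub; exists T; auto).
  exists v. split; [split; auto|].
  - intros e He.
    assert (exists T0, 0 <= T0 /\ v - e < RInt f 0 T0) as [T0 [HT0 HvT0]].
    { apply Classical_Prop.NNPP. intros Hn.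
      assert (is_upper_bound E (v - e)).
      { intros y [T [HT ->]]. apply Rnot_lt_le. intros Hl. apply Hn. exists T; auto. }
      specialize (Hlub _ H). lra. }
    exists T0. intros T HT.
    assert (RInt f 0 T0 <= RInt f 0 T) by (apply RInt_mono_T; [lra | apply Hex; lra | intros; apply Hp; lra]).
    specialize (Hle T ltac:(lra)).
    apply Rabs_def1; lra.
  - split; [|split; auto].
    + specialize (Hle 0 (Rle_refl 0)). rewrite RInt_point in Hle. exact Hle.
    + apply Hlub. intros y [T [HT ->]]. auto.
Qed.


Lemma conv_inf_ub f v C T0 : conv_inf f v -> (forall T, T0 <= T -> RInt f 0 T <= C) -> v <= C.
Proof.
  intros [_ Hl] H. apply Rnot_lt_le. intros Hc.
  destruct (Hl (v - C)) as [M HM]; [lra|].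
  specialize (HM (Rmax M T0) (Rmax_l _ _)). specialize (H (Rmax M T0) (Rmax_r _ _)).
  apply Rabs_def2 in HM. lra.
Qed.

Lemma conv_inf_lb f v C T0 : conv_inf f v -> (forall T, T0 <= T -> C <= RInt f 0 T) -> C <= v.
Proof.
  intros [_ Hl] H. apply Rnot_lt_le. intros Hc.
  destruct (Hl (C - v)) as [M HM]; [lra|].
  specialize (HM (Rmax M T0) (Rmax_l _ _)). specialize (H (Rmax M T0) (Rmax_r _ _)).
  apply Rabs_def2 in HM. lra.
Qed.

Lemma conv_inf_le f g v w : conv_inf f v -> conv_inf g w ->
  (forall x, 0 <= x -> f x <= g x) -> v <= w.
Proof.
  intros Hf Hg H.
  destruct Hf as [Ef Lf]. destruct Hg as [Eg Lg].
  apply Rnot_lt_le. intros Hc.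
  destruct (Lf ((v - w)/2)) as [M1 HM1]; [lra|].
  destruct (Lg ((v - w)/2)) as [M2 HM2]; [lra|].
  set (T := Rmax 0 (Rmax M1 M2)).
  assert (H0T : 0 <= T) by apply Rmax_l.
  specialize (HM1 T ltac:(unfold T; eapply Rle_trans; [apply Rmax_l|apply Rmax_r])).
  specialize (HM2 T ltac:(unfold T; eapply Rle_trans; [apply Rmax_r|apply Rmax_r])).
  assert (RInt f 0 T <= RInt g 0 T) by (apply RInt_le; auto; intros; apply H; lra).
  apply Rabs_def2 in HM1. apply Rabs_def2 in HM2. lra.
Qed.

Lemma conv_inf_scal f v k : conv_inf f v -> conv_inf (fun x => k * f x) (k * v).
Proof.
  intros [Ex L]. split.
  - intros T HT. apply (ex_RInt_scal f 0 T k). auto.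
  - intros e He.
    destruct (L (e / (Rabs k + 1))) as [M HM].
    { apply Rdiv_lt_0_compat; [lra|]. pose proof (Rabs_pos k); lra. }
    exists (Rmax M 0). intros T HT.
    assert (HT0 : 0 <= T) by (eapply Rle_trans; [apply Rmax_r|exact HT]).
    assert (RInt (fun x => k * f x) 0 T = k * RInt f 0 T).
    { apply (RInt_scal f 0 T k). auto. }
    rewrite H. replace (k * RInt f 0 T - k * v) with (k * (RInt f 0 T - v)) by ring.
    rewrite Rabs_mult.
    specialize (HM T ltac:(eapply Rle_trans; [apply Rmax_l|exact HT])).
    pose proof (Rabs_pos k). pose proof (Rabs_pos (RInt f 0 T - v)).
    apply Rle_lt_trans with ((Rabs k + 1) * Rabs (RInt f 0 T - v)); [nra|].
    apply Rmult_lt_reg_l with (/ (Rabs k + 1)). apply Rinv_0_lt_compat; lra.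
    rewrite <- Rmult_assoc, Rinv_l, Rmult_1_l by lra. unfold Rdiv in HM. lra.
Qed.

Lemma conv_inf_eventually f v T0 : (forall T, 0 <= T -> ex_RInt f 0 T) ->
  (forall T, T0 <= T -> RInt f 0 T = v) -> conv_inf f v.
Proof.
  intros Ex H. split; auto. intros e He. exists T0. intros T HT. rewrite H by auto.
  rewrite Rminus_diag, Rabs_R0. auto.
Qed.

Lemma is_RInt_kexp k u v : is_RInt (fun z => k * exp (- k * z)) u v (exp (- k * u) - exp (- k * v)).
Proof.
  replace (exp (- k * u) - exp (- k * v)) with (minus ((fun z => - exp (- k * z)) v) ((fun z => - exp (- k * z)) u)).
  2:{ unfold minus, plus, opp; simpl. ring. }
  apply (is_RInt_derive (fun z => - exp (- k * z))).
  - intros x _. auto_derive; auto. ring.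
  - intros x _. apply continuity_pt_filterlim. apply derivable_continuous_pt. reg.
Qed.

Lemma RInt_kexp k u v : ex_RInt (fun z => k * exp (- k * z)) u v /\
  RInt (fun z => k * exp (- k * z)) u v = exp (- k * u) - exp (- k * v).
Proof.
  split; [eexists; apply is_RInt_kexp|]. apply is_RInt_unique. apply is_RInt_kexp.
Qed.

Lemma is_RInt_inv e u v : e < u -> u <= v ->
  is_RInt (fun x => / (x - e)) u v (ln (v - e) - ln (u - e)).
Proof.
  intros H1 H2.
  replace (ln (v - e) - ln (u - e)) with (minus ((fun x => ln (x - e)) v) ((fun x => ln (x - e)) u)).
  2:{ unfold minus, plus, opp; simpl. ring. }
  apply (is_RInt_derive (fun x => ln (x - e))).
  - intros x Hx. rewrite Rmin_left, Rmax_right in Hx by lra. auto_derive; [lra|]. field. lra.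
  - intros x Hx. rewrite Rmin_left, Rmax_right in Hx by lra.
    apply continuity_pt_filterlim. apply continuity_pt_inv; [|lra].
    apply derivable_continuous_pt. reg.
Qed.

Lemma is_RInt_lin RD : 0 < RD -> is_RInt (fun r => 2 * r / RD ^ 2) 0 RD 1.
Proof.
  intros H.
  replace 1 with (minus ((fun r => r ^ 2 / RD ^ 2) RD) ((fun r => r ^ 2 / RD ^ 2) 0)).
  2:{ unfold minus, plus, opp; simpl. field. lra. }
  apply (is_RInt_derive (fun r => r ^ 2 / RD ^ 2)).
  - intros x _. auto_derive; auto. field. lra.
  - intros x _. apply continuity_pt_filterlim. apply derivable_continuous_pt. reg.
Qed.

Lemma RInt_support (f : R -> R) T c M : 0 <= T -> 0 <= c -> 0 <= M -> ex_RInt f 0 T ->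
  (forall x, 0 <= x <= T -> x <= c -> f x <= M) ->
  (forall x, 0 <= x <= T -> c < x -> f x = 0) -> RInt f 0 T <= M * c.
Proof.
  intros HT Hc HM Ex Hb H0.
  set (c' := Rmin c T).
  assert (Hc'1 : 0 <= c') by (apply Rmin_glb; lra).
  assert (Hc'2 : c' <= T) by apply Rmin_r.
  assert (Hc'3 : c' <= c) by apply Rmin_l.
  assert (E1 : ex_RInt f 0 c') by (apply (ex_RInt_sub f 0 T); auto; lra).
  assert (E2 : ex_RInt f c' T) by (apply (ex_RInt_sub f 0 T); auto; lra).
  rewrite (RInt_Chasles_R f 0 c' T) by auto.
  assert (RInt f 0 c' <= RInt (fun _ => M) 0 c') by
    (apply RInt_le; auto; [apply ex_RInt_const|]; intros x Hx; apply Hb; lra).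
  rewrite RInt_cst in H.
  assert (RInt f c' T = 0).
  { destruct (Rle_lt_dec c T) as [HcT|HcT].
    - assert (c' = c) by (apply Rmin_left; lra).
      rewrite (RInt_ext_open f (fun _ => 0) c' T) by (auto; intros x Hx; apply H0; lra).
      rewrite RInt_cst. apply Rmult_0_r.
    - assert (c' = T) by (apply Rmin_right; lra). rewrite H1. apply (RInt_point (V:=R_CompleteNormedModule)). }
  nra.
Qed.

Lemma ind_lt_1 u w : u < w -> ind_lt u w = 1.
Proof. intros H. unfold ind_lt. destruct (Rlt_dec u w); lra. Qed.
Lemma ind_lt_0 u w : w <= u -> ind_lt u w = 0.
Proof. intros H. unfold ind_lt. destruct (Rlt_dec u w); lra. Qed.
Lemma ind_lt_bnd u w : 0 <= ind_lt u w <= 1.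
Proof. unfold ind_lt. destruct (Rlt_dec u w); lra. Qed.
Lemma ind_lt_mono u u' w : u <= u' -> ind_lt u' w <= ind_lt u w.
Proof. intros H. unfold ind_lt. destruct (Rlt_dec u w); destruct (Rlt_dec u' w); lra. Qed.

Lemma exp_le1 x : x <= 0 -> exp x <= 1.
Proof. intros H. rewrite <- exp_0. destruct (Req_dec x 0); [subst; lra|]. left. apply exp_increasing. lra. Qed.

Lemma kexp_bnd k z : 0 < k -> 0 <= z -> 0 < k * exp (- k * z) <= k.
Proof.
  intros Hk Hz. split. apply Rmult_lt_0_compat; [lra|apply exp_pos].
  assert (exp (- k * z) <= 1) by (apply exp_le1; nra). pose proof (exp_pos (- k * z)). nra.
Qed.

Lemma kexp_dec k z1 z2 : 0 < k -> z1 <= z2 -> k * exp (- k * z2) <= k * exp (- k * z1).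
Proof.
  intros Hk Hz. apply Rmult_le_compat_l; [lra|].
  destruct (Req_dec z1 z2); [subst; lra|]. left. apply exp_increasing. nra.
Qed.

Lemma prod_dec (f g : R -> R) x1 x2 : 0 <= f x2 -> f x2 <= f x1 -> 0 <= g x2 -> g x2 <= g x1 ->
  f x2 * g x2 <= f x1 * g x1.
Proof. intros. nra. Qed.

Lemma RInt_scal_R (f : R -> R) a b k : ex_RInt f a b -> RInt (fun x => k * f x) a b = k * RInt f a b.
Proof. intros H. apply (RInt_scal f a b k). exact H. Qed.

Lemma ex_RInt_scal_R (f : R -> R) a b k : ex_RInt f a b -> ex_RInt (fun x => k * f x) a b.
Proof. intros H. apply (ex_RInt_scal f a b k). exact H. Qed.

Definition Ind (eps eta x y z : R) := ind_lt eps x * ind_lt (z + eta * y * (x - eps)) eps.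
Definition fz a eps eta x y := fun z => a * exp (- a * z) * (ind_lt eps x * ind_lt (z + eta * y * (x - eps)) eps).
Definition Zf a eps eta x y := RInt_0_inf (fz a eps eta x y).
Definition fy a eps eta x := fun y => a * exp (- a * y) * Zf a eps eta x y.
Definition Vf a eps eta x := RInt_0_inf (fy a eps eta x).


Lemma Ind_bnd eps eta x y z : 0 <= Ind eps eta x y z <= 1.
Proof. unfold Ind. pose proof (ind_lt_bnd eps x). pose proof (ind_lt_bnd (z + eta * y * (x - eps)) eps). nra. Qed.

Lemma Ind_zero_x eps eta x y z : x <= eps -> Ind eps eta x y z = 0.
Proof. intros H. unfold Ind. rewrite ind_lt_0 by lra. ring. Qed.

Lemma Ind_zero_big eps eta x y z : 0 <= z -> eps <= eta * y * (x - eps) -> Ind eps eta x y z = 0.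
Proof. intros H1 H2. unfold Ind. rewrite (ind_lt_0 (z + _)) by lra. ring. Qed.

Lemma Ind_zero_z eps eta x y z : 0 < eta -> 0 <= y -> eps <= z -> Ind eps eta x y z = 0.
Proof.
  intros He Hy Hz. destruct (Rle_dec x eps). apply Ind_zero_x; auto.
  unfold Ind. rewrite (ind_lt_0 (z + _)); [ring|]. assert (0 <= eta * y * (x - eps)).
  { apply Rmult_le_pos; [apply Rmult_le_pos|]; lra. } lra.
Qed.

Lemma Ind_dec_z eps eta x y z1 z2 : z1 <= z2 -> Ind eps eta x y z2 <= Ind eps eta x y z1.
Proof.
  intros H. unfold Ind. pose proof (ind_lt_bnd eps x).
  pose proof (ind_lt_mono (z1 + eta * y * (x - eps)) (z2 + eta * y * (x - eps)) eps ltac:(lra)).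
  nra.
Qed.

Lemma Ind_dec_y eps eta x y1 y2 z : 0 < eta -> y1 <= y2 -> Ind eps eta x y2 z <= Ind eps eta x y1 z.
Proof.
  intros He H. destruct (Rle_dec x eps).
  - rewrite !Ind_zero_x by auto. lra.
  - unfold Ind. rewrite ind_lt_1 by lra.
    assert (eta * y1 * (x - eps) <= eta * y2 * (x - eps)).
    { apply Rmult_le_compat_r; [lra|]. apply Rmult_le_compat_l; lra. }
    pose proof (ind_lt_mono (z + eta * y1 * (x - eps)) (z + eta * y2 * (x - eps)) eps ltac:(lra)).
    lra.
Qed.

Lemma Ind_dec_x eps eta x1 x2 y z : 0 < eta -> 0 <= y -> eps < x1 -> x1 <= x2 ->
  Ind eps eta x2 y z <= Ind eps eta x1 y z.
Proof.
  intros He Hy H1 H2. unfold Ind. rewrite (ind_lt_1 eps x1), (ind_lt_1 eps x2) by lra.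
  assert (eta * y * (x1 - eps) <= eta * y * (x2 - eps)).
  { apply Rmult_le_compat_l; [apply Rmult_le_pos; lra|]. lra. }
  pose proof (ind_lt_mono (z + eta * y * (x1 - eps)) (z + eta * y * (x2 - eps)) eps ltac:(lra)).
  lra.
Qed.

Lemma fz_eq a eps eta x y z : fz a eps eta x y z = a * exp (- a * z) * Ind eps eta x y z.
Proof. reflexivity. Qed.

Lemma ex_RInt_kexp k u v : ex_RInt (fun z => k * exp (- k * z)) u v.
Proof. apply RInt_kexp. Qed.

Lemma Z_conv a eps eta x y : 0 < a ->
  conv_inf (fz a eps eta x y) (Zf a eps eta x y) /\ 0 <= Zf a eps eta x y <= 1.
Proof.
  intros ha.
  assert (Ex : forall T, 0 <= T -> ex_RInt (fz a eps eta x y) 0 T).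
  { intros T HT. apply ex_RInt_dec; auto. intros u v Hu Huv Hv. rewrite !fz_eq.
    apply (prod_dec (fun z => a * exp (- a * z)) (Ind eps eta x y)).
    - pose proof (kexp_bnd a v ha ltac:(lra)). lra.
    - apply kexp_dec; auto.
    - apply Ind_bnd.
    - apply Ind_dec_z; auto. }
  destruct (mct (fz a eps eta x y) 1 Ex) as [v [Hc [H0 [H1 _]]]].
  - intros z Hz. rewrite fz_eq. pose proof (kexp_bnd a z ha Hz). pose proof (Ind_bnd eps eta x y z). nra.
  - intros T HT. apply Rle_trans with (RInt (fun z => a * exp (- a * z)) 0 T).
    + apply RInt_le; auto; [apply ex_RInt_kexp|]. intros z Hz. rewrite fz_eq.
      pose proof (kexp_bnd a z ha ltac:(lra)). pose proof (Ind_bnd eps eta x y z). nra.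
    + rewrite (proj2 (RInt_kexp a 0 T)). rewrite Rmult_0_r, exp_0. pose proof (exp_pos (- a * T)). lra.
  - unfold Zf. rewrite (conv_inf_val _ _ Hc). auto.
Qed.

Lemma Z_le a eps eta x y : 0 < a -> 0 < eps -> 0 < eta -> 0 <= y -> Zf a eps eta x y <= a * eps.
Proof.
  intros ha he heta hy. destruct (Z_conv a eps eta x y ha) as [Hc _].
  apply (conv_inf_ub _ _ _ 0 Hc). intros T HT.
  apply RInt_support; try lra. apply Hc; lra.
  - intros z Hz _. rewrite fz_eq. pose proof (kexp_bnd a z ha ltac:(lra)). pose proof (Ind_bnd eps eta x y z). nra.
  - intros z Hz Hz'. rewrite fz_eq. rewrite Ind_zero_z by lra. ring.
Qed.

Lemma Z_zero a eps eta x y : 0 < a -> (forall z, 0 <= z -> Ind eps eta x y z = 0) -> Zf a eps eta x y = 0.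
Proof.
  intros ha H. destruct (Z_conv a eps eta x y ha) as [Hc Hb].
  apply Rle_antisym; [|lra].
  replace 0 with (0 * 0) by ring.
  apply (conv_inf_ub _ _ _ 0 Hc). intros T HT.
  apply RInt_support; try lra. apply Hc; lra.
  - intros z Hz _. rewrite fz_eq, H by lra. lra.
  - intros z Hz Hz'. rewrite fz_eq, H by lra. ring.
Qed.

Lemma Z_dec_y a eps eta x y1 y2 : 0 < a -> 0 < eta -> y1 <= y2 -> Zf a eps eta x y2 <= Zf a eps eta x y1.
Proof.
  intros ha heta H. destruct (Z_conv a eps eta x y1 ha) as [H1 _]. destruct (Z_conv a eps eta x y2 ha) as [H2 _].
  apply (conv_inf_le _ _ _ _ H2 H1). intros z Hz. rewrite !fz_eq.
  pose proof (kexp_bnd a z ha Hz). pose proof (Ind_dec_y eps eta x y1 y2 z heta H). nra.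
Qed.

Lemma Z_dec_x a eps eta x1 x2 y : 0 < a -> 0 < eta -> 0 <= y -> eps < x1 -> x1 <= x2 ->
  Zf a eps eta x2 y <= Zf a eps eta x1 y.
Proof.
  intros ha heta hy H1 H2. destruct (Z_conv a eps eta x1 y ha) as [C1 _]. destruct (Z_conv a eps eta x2 y ha) as [C2 _].
  apply (conv_inf_le _ _ _ _ C2 C1). intros z Hz. rewrite !fz_eq.
  pose proof (kexp_bnd a z ha Hz). pose proof (Ind_dec_x eps eta x1 x2 y z heta hy H1 H2). nra.
Qed.

Lemma fy_eq a eps eta x y : fy a eps eta x y = a * exp (- a * y) * Zf a eps eta x y.
Proof. reflexivity. Qed.

Lemma V_conv a eps eta x : 0 < a -> 0 < eps -> 0 < eta ->
  conv_inf (fy a eps eta x) (Vf a eps eta x) /\ 0 <= Vf a eps eta x <= a * eps.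
Proof.
  intros ha he heta.
  assert (Ex : forall T, 0 <= T -> ex_RInt (fy a eps eta x) 0 T).
  { intros T HT. apply ex_RInt_dec; auto. intros u v Hu Huv Hv. rewrite !fy_eq.
    apply (prod_dec (fun z => a * exp (- a * z)) (Zf a eps eta x)).
    - pose proof (kexp_bnd a v ha ltac:(lra)). lra.
    - apply kexp_dec; auto.
    - apply Z_conv; auto.
    - apply Z_dec_y; auto. }
  destruct (mct (fy a eps eta x) (a * eps) Ex) as [v [Hc [H0 [H1 _]]]].
  - intros z Hz. rewrite fy_eq. pose proof (kexp_bnd a z ha Hz). pose proof (proj2 (Z_conv a eps eta x z ha)). nra.
  - intros T HT. apply Rle_trans with (RInt (fun z => (a * eps) * (a * exp (- a * z))) 0 T).
    + apply RInt_le; auto; [apply ex_RInt_scal_R, ex_RInt_kexp|]. intros z Hz. rewrite fy_eq.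
      pose proof (kexp_bnd a z ha ltac:(lra)). pose proof (proj2 (Z_conv a eps eta x z ha)).
      pose proof (Z_le a eps eta x z ha he heta ltac:(lra)). nra.
    + rewrite RInt_scal_R by apply ex_RInt_kexp.
      rewrite (proj2 (RInt_kexp a 0 T)). rewrite Rmult_0_r, exp_0. pose proof (exp_pos (- a * T)).
      assert (0 < a * eps) by nra. nra.
  - unfold Vf. rewrite (conv_inf_val _ _ Hc). auto.
Qed.

Lemma V_zero a eps eta x : 0 < a -> 0 < eps -> 0 < eta -> x <= eps -> Vf a eps eta x = 0.
Proof.
  intros ha he heta hx. destruct (V_conv a eps eta x ha he heta) as [Hc Hb].
  apply Rle_antisym; [|lra]. replace 0 with (0 * 0) by ring.
  assert (HZ : forall y, Zf a eps eta x y = 0).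
  { intros y. apply Z_zero; auto. intros. apply Ind_zero_x; auto. }
  apply (conv_inf_ub _ _ _ 0 Hc). intros T HT.
  apply RInt_support; try lra. apply Hc; lra.
  - intros z Hz _. rewrite fy_eq, HZ. lra.
  - intros z Hz Hz'. rewrite fy_eq, HZ. ring.
Qed.

Lemma V_le_k a eps eta x : 0 < a -> 0 < eps -> 0 < eta -> eps < x ->
  Vf a eps eta x <= a * (a * eps) * (eps / (eta * (x - eps))).
Proof.
  intros ha he heta hx. destruct (V_conv a eps eta x ha he heta) as [Hc Hb].
  assert (Hk : 0 < eps / (eta * (x - eps))) by (apply Rdiv_lt_0_compat; nra).
  apply (conv_inf_ub _ _ _ 0 Hc). intros T HT.
  apply RInt_support; try lra. nra. apply Hc; lra.
  - intros z Hz _. rewrite fy_eq.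
    pose proof (kexp_bnd a z ha ltac:(lra)). pose proof (proj2 (Z_conv a eps eta x z ha)).
    pose proof (Z_le a eps eta x z ha he heta ltac:(lra)). nra.
  - intros y Hy Hy'. rewrite fy_eq. rewrite Z_zero; auto; [ring|].
    intros z Hz. apply Ind_zero_big; auto.
    assert (eps / (eta * (x - eps)) * (eta * (x - eps)) = eps) by (field; nra).
    assert (0 < eta * (x - eps)) by nra. nra.
Qed.

Lemma V_dec a eps eta x1 x2 : 0 < a -> 0 < eps -> 0 < eta -> eps < x1 -> x1 <= x2 ->
  Vf a eps eta x2 <= Vf a eps eta x1.
Proof.
  intros ha he heta H1 H2. destruct (V_conv a eps eta x1 ha he heta) as [C1 _].
  destruct (V_conv a eps eta x2 ha he heta) as [C2 _].
  apply (conv_inf_le _ _ _ _ C2 C1). intros y Hy. rewrite !fy_eq.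
  pose proof (kexp_bnd a y ha Hy). pose proof (Z_dec_x a eps eta x1 x2 y ha heta Hy H1 H2). nra.
Qed.

Definition hx a eps eta b := fun x => exp (- b * x) * Vf a eps eta x.
Definition Gf a eps eta b := RInt_0_inf (hx a eps eta b).

Lemma hx_eq a eps eta b x : hx a eps eta b x = exp (- b * x) * Vf a eps eta x.
Proof. reflexivity. Qed.

Lemma exp_dec b x1 x2 : 0 <= b -> x1 <= x2 -> exp (- b * x2) <= exp (- b * x1).
Proof. intros Hb H. destruct (Req_dec (- b * x2) (- b * x1)) as [E|E]; [rewrite E; lra|].
  left. apply exp_increasing. nra. Qed.

Lemma G_conv a eps eta b : 0 < a -> 0 < eps -> 0 < eta -> 0 < b ->
  conv_inf (hx a eps eta b) (Gf a eps eta b) /\ 0 <= Gf a eps eta b.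
Proof.
  intros ha he heta hb.
  assert (Ex : forall T, 0 <= T -> ex_RInt (hx a eps eta b) 0 T).
  { intros T HT. apply (ex_RInt_jump _ 0 T eps (a * eps)); auto.
    - intros t Ht Hte. rewrite hx_eq, V_zero by auto. ring.
    - intros u v Hu Hcu Huv Hv. rewrite !hx_eq.
      apply (prod_dec (fun x => exp (- b * x)) (Vf a eps eta)).
      + left. apply exp_pos.
      + apply exp_dec; lra.
      + apply V_conv; auto.
      + apply V_dec; auto.
    - intros t Ht. rewrite hx_eq. pose proof (proj2 (V_conv a eps eta t ha he heta)).
      pose proof (exp_pos (- b * t)). assert (exp (- b * t) <= 1) by (apply exp_le1; nra). nra. }
  destruct (mct (hx a eps eta b) (a * eps / b) Ex) as [v [Hc [H0 [H1 _]]]].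
  - intros z Hz. rewrite hx_eq. pose proof (proj2 (V_conv a eps eta z ha he heta)). pose proof (exp_pos (- b * z)). nra.
  - intros T HT. apply Rle_trans with (RInt (fun z => (a * eps / b) * (b * exp (- b * z))) 0 T).
    + apply RInt_le; auto; [apply ex_RInt_scal_R, ex_RInt_kexp|]. intros z Hz. rewrite hx_eq.
      replace (a * eps / b * (b * exp (- b * z))) with (exp (- b * z) * (a * eps)) by (field; lra).
      pose proof (proj2 (V_conv a eps eta z ha he heta)). pose proof (exp_pos (- b * z)). nra.
    + rewrite RInt_scal_R by apply ex_RInt_kexp.
      rewrite (proj2 (RInt_kexp b 0 T)). rewrite Rmult_0_r, exp_0. pose proof (exp_pos (- b * T)).
      assert (0 < a * eps / b) by (apply Rdiv_lt_0_compat; nra). nra.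
  - unfold Gf. rewrite (conv_inf_val _ _ Hc). auto.
Qed.

Lemma F_eq a eps eta b : 0 < a -> 0 < eps -> 0 < eta -> 0 < b ->
  RInt_0_inf (fun x => b * exp (- b * x) * Vf a eps eta x) = b * Gf a eps eta b.
Proof.
  intros ha he heta hb. apply conv_inf_val.
  replace (fun x => b * exp (- b * x) * Vf a eps eta x) with (fun x => b * hx a eps eta b x).
  2:{ apply functional_extensionality. intros x. rewrite hx_eq. ring. }
  apply conv_inf_scal. apply G_conv; auto.
Qed.

Lemma G_dec a eps eta b1 b2 : 0 < a -> 0 < eps -> 0 < eta -> 0 < b1 -> b1 <= b2 ->
  Gf a eps eta b2 <= Gf a eps eta b1.
Proof.
  intros ha he heta hb H. destruct (G_conv a eps eta b1 ha he heta hb) as [C1 _].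
  destruct (G_conv a eps eta b2 ha he heta ltac:(lra)) as [C2 _].
  apply (conv_inf_le _ _ _ _ C2 C1). intros x Hx. rewrite !hx_eq.
  pose proof (proj2 (V_conv a eps eta x ha he heta)).
  assert (exp (- b2 * x) <= exp (- b1 * x)).
  { destruct (Req_dec (- b2 * x) (- b1 * x)) as [E|E]; [rewrite E; lra|]. left. apply exp_increasing. nra. }
  nra.
Qed.

Lemma G_bound a eps eta b : 0 < a -> 0 < eps -> 0 < eta -> 1 <= b -> a * eps / eta <= 1 ->
  Gf a eps eta b <= a * eps * (eps + 2 * (a * eps / eta) - (a * eps / eta) * ln (a * eps / eta)).
Proof.
  intros ha he heta hb hs. set (s := a * eps / eta) in *.
  assert (Hs : 0 < s) by (unfold s; apply Rdiv_lt_0_compat; nra).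
  destruct (G_conv a eps eta b ha he heta ltac:(lra)) as [Hc _].
  apply (conv_inf_ub _ _ _ (eps + 1) Hc). intros T HT.
  assert (Ex : ex_RInt (hx a eps eta b) 0 T) by (apply Hc; lra).
  assert (E1 : ex_RInt (hx a eps eta b) 0 (eps + s)) by (apply (ex_RInt_sub _ 0 T); auto; lra).
  assert (E2 : ex_RInt (hx a eps eta b) (eps + s) (eps + 1)) by (apply (ex_RInt_sub _ 0 T); auto; lra).
  assert (E3 : ex_RInt (hx a eps eta b) (eps + 1) T) by (apply (ex_RInt_sub _ 0 T); auto; lra).
  assert (E12 : ex_RInt (hx a eps eta b) 0 (eps + 1)) by (apply (ex_RInt_sub _ 0 T); auto; lra).
  rewrite (RInt_Chasles_R _ 0 (eps + 1) T) by auto.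
  rewrite (RInt_Chasles_R _ 0 (eps + s) (eps + 1)) by auto.
  assert (Hvb : forall x, eps < x -> Vf a eps eta x <= a * eps * s * / (x - eps)).
  { intros x Hx. eapply Rle_trans; [apply V_le_k; auto|]. right. unfold s. field. split; lra. }
  assert (P1 : RInt (hx a eps eta b) 0 (eps + s) <= (eps + s) * (a * eps)).
  { replace ((eps + s) * (a * eps)) with ((eps + s - 0) * (a * eps)) by ring.
    rewrite <- RInt_cst. apply RInt_le; auto; [lra|apply ex_RInt_const|].
    intros x Hx. rewrite hx_eq. pose proof (proj2 (V_conv a eps eta x ha he heta)).
    pose proof (exp_pos (- b * x)). assert (exp (- b * x) <= 1) by (apply exp_le1; nra). nra. }
  assert (P2 : RInt (hx a eps eta b) (eps + s) (eps + 1) <= a * eps * s * (ln (eps + 1 - eps) - ln (eps + s - eps))).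
  { assert (Ii := is_RInt_inv eps (eps + s) (eps + 1) ltac:(lra) ltac:(lra)).
    rewrite <- (is_RInt_unique _ _ _ _ Ii).
    rewrite <- RInt_scal_R by (eexists; exact Ii).
    apply RInt_le; auto; [lra|apply ex_RInt_scal_R; eexists; exact Ii|].
    intros x Hx. rewrite hx_eq. pose proof (proj2 (V_conv a eps eta x ha he heta)).
    pose proof (exp_pos (- b * x)). assert (exp (- b * x) <= 1) by (apply exp_le1; nra).
    specialize (Hvb x ltac:(lra)). nra. }
  assert (P3 : RInt (hx a eps eta b) (eps + 1) T <= a * eps * s).
  { clear P1 P2. apply Rle_trans with (RInt (fun x => (a * eps * s) * (1 * exp (Ropp 1 * x))) (eps + 1) T).
    - apply RInt_le; auto; [apply ex_RInt_scal_R, ex_RInt_kexp|].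
      intros x Hx. rewrite hx_eq. pose proof (proj2 (V_conv a eps eta x ha he heta)).
      assert (exp (- b * x) <= exp (Ropp 1 * x)).
      { destruct (Req_dec (- b * x) (Ropp 1 * x)) as [E|E]; [rewrite E; lra|]. left. apply exp_increasing. nra. }
      specialize (Hvb x ltac:(lra)).
      assert (/ (x - eps) <= 1) by (rewrite <- Rinv_1; apply Rinv_le_contravar; lra).
      assert (0 < a * eps * s) by (apply Rmult_lt_0_compat; [apply Rmult_lt_0_compat|]; assumption). pose proof (exp_pos (- b * x)). pose proof (exp_pos (Ropp 1 * x)).
      assert (Vf a eps eta x <= a * eps * s) by nra. nra.
    - rewrite RInt_scal_R by apply ex_RInt_kexp. rewrite (proj2 (RInt_kexp 1 (eps + 1) T)).
      pose proof (exp_pos (Ropp 1 * T)). assert (exp (Ropp 1 * (eps + 1)) <= 1) by (apply exp_le1; lra).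
      assert (0 < a * eps * s) by (apply Rmult_lt_0_compat; [apply Rmult_lt_0_compat|]; assumption). nra. }
  replace (eps + 1 - eps) with 1 in P2 by ring. replace (eps + s - eps) with s in P2 by ring.
  rewrite ln_1 in P2. nra.
Qed.

Lemma cut_exp k c : 0 < k -> 0 < c ->
  conv_inf (fun z => k * exp (- k * z) * ind_lt z c) (1 - exp (- k * c)).
Proof.
  intros hk hc.
  assert (Ex : forall T, 0 <= T -> ex_RInt (fun z => k * exp (- k * z) * ind_lt z c) 0 T).
  { intros T HT. apply ex_RInt_dec; auto. intros u v Hu Huv Hv.
    apply (prod_dec (fun z => k * exp (- k * z)) (fun z => ind_lt z c)).
    - pose proof (kexp_bnd k v hk ltac:(lra)). lra.
    - apply kexp_dec; auto.
    - apply ind_lt_bnd.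
    - apply ind_lt_mono; auto. }
  apply (conv_inf_eventually _ _ c Ex). intros T HT.
  rewrite (RInt_Chasles_R _ 0 c T) by (apply (ex_RInt_sub _ 0 T); try lra; apply Ex; lra).
  rewrite (RInt_ext_open _ (fun z => k * exp (- k * z)) 0 c) by (try lra; intros x Hx; rewrite ind_lt_1 by lra; ring).
  rewrite (RInt_ext_open _ (fun _ => 0) c T) by (try lra; intros x Hx; rewrite ind_lt_0 by lra; ring).
  rewrite RInt_cst, (proj2 (RInt_kexp k 0 c)), Rmult_0_r, exp_0. simpl. ring.
Qed.

Definition gz a eps x := fun z => a * exp (- a * z) * (ind_lt x eps * ind_lt z eps).
Definition Zs a eps x := RInt_0_inf (gz a eps x).

Lemma Zs_val a eps x : 0 < a -> 0 < eps -> Zs a eps x = ind_lt x eps * (1 - exp (- a * eps)).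
Proof.
  intros ha he. apply conv_inf_val.
  replace (gz a eps x) with (fun z => ind_lt x eps * (a * exp (- a * z) * ind_lt z eps)).
  2:{ apply functional_extensionality. intros z. unfold gz. ring. }
  apply conv_inf_scal. apply cut_exp; auto.
Qed.

Lemma S_val a eps b : 0 < a -> 0 < eps -> 0 < b ->
  RInt_0_inf (fun x => b * exp (- b * x) * Zs a eps x) = (1 - exp (- a * eps)) * (1 - exp (- b * eps)).
Proof.
  intros ha he hb. apply conv_inf_val.
  replace (fun x => b * exp (- b * x) * Zs a eps x) with
    (fun x => (1 - exp (- a * eps)) * (b * exp (- b * x) * ind_lt x eps)).
  2:{ apply functional_extensionality. intros x. rewrite Zs_val by auto. ring. }
  apply conv_inf_scal. apply cut_exp; auto.
Qed.

Lemma one_minus_exp t : 0 <= t -> 0 <= 1 - exp (- t) <= t.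
Proof. intros H. split. assert (exp (- t) <= 1) by (apply exp_le1; lra). lra.
  pose proof (exp_ineq1_le (- t)). lra. Qed.

Lemma P1_eq d RD eta tau P : P1 d RD eta tau P = Defs.RInt (fun r => 2 * r / RD ^ 2 *
  (RInt_0_inf (fun x => (1 + r ^ 2) * exp (- (1 + r ^ 2) * x) * Vf (1 + d ^ 2) (tau / P) eta x) +
   RInt_0_inf (fun x => (1 + r ^ 2) * exp (- (1 + r ^ 2) * x) * Zs (1 + d ^ 2) (tau / P) x))) 0 RD.
Proof. reflexivity. Qed.

Lemma main_bounds a eps eta RD : 1 <= a -> 0 < eps -> 0 < eta -> 0 < RD -> a * eps / eta <= 1 ->
  (1 - exp (- a * eps)) * (1 - exp (- (1) * eps)) <=
  Defs.RInt (fun r => 2 * r / RD ^ 2 *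
  (RInt_0_inf (fun x => (1 + r ^ 2) * exp (- (1 + r ^ 2) * x) * Vf a eps eta x) +
   RInt_0_inf (fun x => (1 + r ^ 2) * exp (- (1 + r ^ 2) * x) * Zs a eps x))) 0 RD <=
  (1 + RD ^ 2) * (a * eps * (eps + 2 * (a * eps / eta) - (a * eps / eta) * ln (a * eps / eta)) + a * eps * eps).
Proof.
  intros ha he heta hRD hs.
  assert (ha0 : 0 < a) by lra.
  set (K := / RD ^ 2).
  assert (HK : 0 < K) by (unfold K; apply Rinv_0_lt_compat; apply pow_lt; lra).
  set (c0 := 1 - exp (- a * eps)).
  assert (Hc0 : 0 <= c0 <= a * eps) by (unfold c0; replace (- a * eps) with (- (a * eps)) by ring; apply one_minus_exp; nra).
  set (Gb := a * eps * (eps + 2 * (a * eps / eta) - (a * eps / eta) * ln (a * eps / eta))).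
  set (p := fun r => 2 * r * K * (1 + r ^ 2)).
  set (q := fun r => Gf a eps eta (1 + r ^ 2)).
  set (sr := fun r => 2 * r * K * (c0 * (1 - exp (- (1 + r ^ 2) * eps)))).
  set (H := fun r => 2 * r / RD ^ 2 *
    (RInt_0_inf (fun x => (1 + r ^ 2) * exp (- (1 + r ^ 2) * x) * Vf a eps eta x) +
     RInt_0_inf (fun x => (1 + r ^ 2) * exp (- (1 + r ^ 2) * x) * Zs a eps x))).
  assert (Hb : forall r, 0 < 1 + r ^ 2) by (intros r; pose proof (pow2_ge_0 r); lra).
  assert (Hpt : forall r, H r = p r * q r + sr r).
  { intros r. unfold H, p, q, sr. rewrite F_eq, S_val by auto. fold c0. unfold Rdiv. fold K. ring. }
  assert (Gq : forall r, 0 <= q r) by (intros r; apply G_conv; auto).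
  assert (Gq1 : forall r, q r <= Gf a eps eta 1).
  { intros r. apply G_dec; auto; try lra. pose proof (pow2_ge_0 r); lra. }
  assert (Gq2 : forall r, q r <= Gb).
  { intros r. apply G_bound; auto. pose proof (pow2_ge_0 r); lra. }
  assert (Esr : forall r, 0 <= 1 - exp (- (1 + r ^ 2) * eps) <= (1 + r ^ 2) * eps).
  { intros r. replace (- (1 + r ^ 2) * eps) with (- ((1 + r ^ 2) * eps)) by ring.
    apply one_minus_exp. pose proof (Hb r); nra. }
  assert (Ex : ex_RInt H 0 RD).
  { apply (ex_RInt_ext (fun r => plus (p r * q r) (sr r))).
    { intros x _. rewrite Hpt. reflexivity. }
    apply (ex_RInt_plus (V:=R_NormedModule) (fun r => p r * q r) sr).
    - apply (ex_RInt_prod p q 0 RD (2 * RD * K * (1 + RD ^ 2)) (Gf a eps eta 1)); try lra.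
      + intros u v Hu Huv Hv. unfold p. assert (u ^ 2 <= v ^ 2) by nra.
        assert (0 <= 2 * u * K) by nra. assert (2 * u * K <= 2 * v * K) by nra. nra.
      + intros u v Hu Huv Hv. unfold q. apply G_dec; auto. nra.
      + intros t Ht. unfold p. assert (t ^ 2 <= RD ^ 2) by nra.
        assert (0 <= 2 * t * K) by nra. assert (2 * t * K <= 2 * RD * K) by nra. nra.
      + intros t Ht. split; auto.
    - apply ex_RInt_inc; try lra. intros u v Hu Huv Hv. unfold sr.
      assert (exp (- (1 + v ^ 2) * eps) <= exp (- (1 + u ^ 2) * eps)).
      { destruct (Req_dec (- (1 + v ^ 2) * eps) (- (1 + u ^ 2) * eps)) as [E|E]; [rewrite E; lra|].
        left. apply exp_increasing. assert (u ^ 2 <= v ^ 2) by nra. nra. }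
      pose proof (Esr u). assert (0 <= 2 * u * K) by nra. assert (2 * u * K <= 2 * v * K) by nra.
      assert (0 <= c0 * (1 - exp (- (1 + u ^ 2) * eps))) by nra.
      assert (c0 * (1 - exp (- (1 + u ^ 2) * eps)) <= c0 * (1 - exp (- (1 + v ^ 2) * eps))) by nra.
      nra. }
  rewrite Defs_RInt_eq by exact Ex.
  assert (Il := is_RInt_lin RD hRD).
  assert (El : ex_RInt (fun r => 2 * r / RD ^ 2) 0 RD) by (eexists; exact Il).
  assert (Vl : RInt (fun r => 2 * r / RD ^ 2) 0 RD = 1) by (apply is_RInt_unique; exact Il).
  split.
  - apply Rle_trans with (RInt (fun r => (c0 * (1 - exp (- (1) * eps))) * (2 * r / RD ^ 2)) 0 RD).
    + rewrite RInt_scal_R, Vl by exact El. lra.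
    + apply RInt_le; auto; [lra|apply ex_RInt_scal_R; exact El|].
      intros r Hr. rewrite Hpt. unfold p, sr. unfold Rdiv. fold K.
      assert (exp (- (1 + r ^ 2) * eps) <= exp (- (1) * eps)).
      { destruct (Req_dec (- (1 + r ^ 2) * eps) (- (1) * eps)) as [E|E]; [rewrite E; lra|].
        left. apply exp_increasing. pose proof (pow2_ge_0 r). nra. }
      assert (0 <= 2 * r * K) by nra. specialize (Gq r). pose proof (Hb r).
      assert (0 <= 2 * r * K * (1 + r ^ 2) * q r) by (apply Rmult_le_pos; nra).
      assert (c0 * (1 - exp (- (1) * eps)) <= c0 * (1 - exp (- (1 + r ^ 2) * eps))) by nra.
      clear Vl. nra.
  - apply Rle_trans with (RInt (fun r => ((1 + RD ^ 2) * (Gb + a * eps * eps)) * (2 * r / RD ^ 2)) 0 RD).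
    + apply RInt_le; auto; [lra|apply ex_RInt_scal_R; exact El|].
      intros r Hr. clear Vl. rewrite Hpt. unfold p, sr. unfold Rdiv. fold K.
      assert (0 <= 2 * r * K) by nra. specialize (Gq r). specialize (Gq2 r). pose proof (Hb r).
      assert (r ^ 2 <= RD ^ 2) by nra. specialize (Esr r).
      assert ((1 + r ^ 2) * q r <= (1 + RD ^ 2) * Gb) by nra.
      assert (c0 * (1 - exp (- (1 + r ^ 2) * eps)) <= a * eps * ((1 + r ^ 2) * eps)) by
        (apply Rmult_le_compat; lra).
      assert (a * eps * ((1 + r ^ 2) * eps) <= (1 + RD ^ 2) * (a * eps * eps)).
      { replace (a * eps * ((1 + r ^ 2) * eps)) with ((1 + r ^ 2) * (a * eps * eps)) by ring.
        apply Rmult_le_compat_r; [|lra]. apply Rmult_le_pos; [apply Rmult_le_pos|]; lra. }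
      nra.
    + rewrite RInt_scal_R, Vl by exact El. fold Gb. lra.
Qed.

Lemma ln_le' x y : 0 < x -> x <= y -> ln x <= ln y.
Proof. intros H1 H2. destruct (Req_dec x y) as [->|E]; [lra|]. left. apply ln_increasing; lra. Qed.

Lemma ln_le_xm1 x : 0 < x -> ln x <= x - 1.
Proof. intros H. pose proof (exp_ineq1_le (ln x)). rewrite exp_ln in H0 by auto. lra. Qed.

Lemma ln_lt_2sqrt y : 0 < y -> ln y < 2 * sqrt y.
Proof.
  intros H. assert (Hs : 0 < sqrt y) by (apply sqrt_lt_R0; auto).
  replace (ln y) with (2 * ln (sqrt y)).
  - pose proof (ln_le_xm1 (sqrt y) Hs). lra.
  - rewrite <- (sqrt_sqrt y) at 2 by lra. rewrite ln_mult by auto. ring.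
Qed.

Lemma one_minus_exp_lb t : 0 <= t <= 1 -> t / 2 <= 1 - exp (- t).
Proof.
  intros H. pose proof (exp_ineq1_le t).
  assert (exp (- t) * exp t = 1) by (rewrite <- exp_plus; replace (- t + t) with 0 by ring; apply exp_0).
  pose proof (exp_pos (- t)). nra.
Qed.

Theorem corollary1 (d RD eta Rt : R) (hd : 0 < d) (hRD : 0 < RD)
  (heta0 : 0 < eta) (heta1 : eta <= 1) (hRt : 0 < Rt) :
  let tau := Rpower 2 (2 * Rt) - 1 in
  forall e, 0 < e -> exists M, forall P, M < P ->
    Rabs (- (ln (P1 d RD eta tau P) / ln P) - 2) < e.
Proof.
  intros tau e He.
  assert (Htau : 0 < tau).
  { unfold tau. assert (Rpower 2 0 < Rpower 2 (2 * Rt)) by (apply Rpower_lt; lra).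
    rewrite Rpower_O in H by lra. lra. }
  set (a := 1 + d ^ 2).
  assert (Ha : 1 <= a) by (unfold a; pose proof (pow2_ge_0 d); lra).
  set (B := 1 + RD ^ 2).
  assert (HB : 1 <= B) by (unfold B; pose proof (pow2_ge_0 RD); lra).
  set (K1 := B * a * (2 + 2 * a / eta)).
  set (K2 := B * a * a / eta).
  assert (HK1 : 0 < K1) by (unfold K1; assert (0 < a / eta) by (apply Rdiv_lt_0_compat; lra);
    apply Rmult_lt_0_compat; [nra|lra]).
  assert (HK2 : 0 < K2) by (unfold K2; apply Rdiv_lt_0_compat; [nra|lra]).
  set (c1 := ln (a / 4) + 2 * ln tau).
  set (c2 := 2 * ln tau).
  set (A := K1 + K2 * Rabs (ln tau)).
  assert (HA : 0 < A) by (unfold A; pose proof (Rabs_pos (ln tau)); nra).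
  set (Lmin := Rmax 1 (Rmax (16 * (A + K2) / (e * e)) (Rmax (2 * Rabs c1 / e) (2 * Rabs c2 / e)))).
  exists (Rmax (exp Lmin) (Rmax (tau * a / eta) (tau * a))).
  intros P HP.
  assert (HL1 : 1 <= Lmin) by apply Rmax_l.
  assert (HPe : exp Lmin < P) by (eapply Rle_lt_trans; [apply Rmax_l|exact HP]).
  assert (HP2 : tau * a / eta < P) by (eapply Rle_lt_trans; [eapply Rle_trans; [apply Rmax_l|apply Rmax_r]|exact HP]).
  assert (HP3 : tau * a < P) by (eapply Rle_lt_trans; [eapply Rle_trans; [apply Rmax_r|apply Rmax_r]|exact HP]).
  assert (HP0 : 0 < P) by (pose proof (exp_pos Lmin); lra).
  set (L := ln P).
  assert (HLL : Lmin < L) by (unfold L; rewrite <- (ln_exp Lmin); apply ln_increasing; [apply exp_pos|auto]).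
  assert (HL0 : 0 < L) by lra.
  set (eps := tau / P).
  assert (Heps : 0 < eps) by (unfold eps; apply Rdiv_lt_0_compat; lra).
  assert (Has : a * eps / eta <= 1).
  { unfold eps. apply Rmult_le_reg_r with (eta * P); [nra|].
    replace (a * (tau / P) / eta * (eta * P)) with (tau * a) by (field; lra).
    assert (tau * a / eta * eta < P * eta) by (apply Rmult_lt_compat_r; lra).
    replace (tau * a / eta * eta) with (tau * a) in H by (field; lra). nra. }
  assert (Hae : a * eps <= 1).
  { unfold eps. apply Rmult_le_reg_r with P; [lra|].
    replace (a * (tau / P) * P) with (tau * a) by (field; lra). lra. }
  assert (Heps1 : eps <= 1) by nra.
  assert (Hleps : ln eps = ln tau - L).
  { unfold eps, L, Rdiv. rewrite ln_mult, ln_Rinv by (try apply Rinv_0_lt_compat; lra). ring. }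
  assert (Hleps0 : ln eps <= 0) by (rewrite <- ln_1; apply ln_le'; lra).
  destruct (main_bounds a eps eta RD Ha Heps heta0 hRD Has) as [Hlo Hhi].
  pose proof (P1_eq d RD eta tau P) as EP. fold a eps in EP. rewrite <- EP in Hlo, Hhi.
  idtac.
  set (Q := P1 d RD eta tau P) in *.
  assert (Hlo' : a * eps * eps / 4 <= Q).
  { eapply Rle_trans; [|exact Hlo].
    replace (- a * eps) with (- (a * eps)) by ring. replace (- (1) * eps) with (- eps) by ring.
    pose proof (one_minus_exp_lb (a * eps) ltac:(nra)). pose proof (one_minus_exp_lb eps ltac:(lra)).
    assert (0 <= a * eps / 2) by nra. assert (0 <= eps / 2) by lra.
    replace (a * eps * eps / 4) with ((a * eps / 2) * (eps / 2)) by field.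
    apply Rmult_le_compat; lra. }
  assert (HQ : 0 < Q) by (eapply Rlt_le_trans; [|exact Hlo']; assert (0 < a * eps) by nra; nra).
  set (Y := K1 + K2 * (- ln eps)).
  assert (HY : 0 < Y) by (unfold Y; nra).
  assert (Hhi' : Q <= eps * eps * Y).
  { eapply Rle_trans; [exact Hhi|].
    set (s := a * eps / eta).
    assert (Hs : 0 < s) by (unfold s; apply Rdiv_lt_0_compat; nra).
    assert (Hls : - ln s <= - ln eps).
    { unfold s. unfold Rdiv. rewrite !ln_mult; try apply Rinv_0_lt_compat; try nra.
      rewrite ln_Rinv by auto.
      assert (0 <= ln a) by (rewrite <- ln_1; apply ln_le'; lra).
      assert (ln eta <= 0) by (rewrite <- ln_1; apply ln_le'; lra). lra. }
    assert (E : eps * eps * Y = B * (a * eps * (eps + 2 * s + s * (- ln eps)) + a * eps * eps)).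
    { unfold Y, K1, K2, s. field. lra. }
    rewrite E. apply Rmult_le_compat_l; [lra|].
    assert (a * eps * (s * (- ln s)) <= a * eps * (s * (- ln eps))).
    { apply Rmult_le_compat_l; [nra|]. apply Rmult_le_compat_l; lra. }
    lra. }
  assert (Hlnlo : c1 - 2 * L <= ln Q).
  { eapply Rle_trans; [|apply ln_le'; [|exact Hlo']]. 
    - replace (a * eps * eps / 4) with ((a / 4) * eps * eps) by field.
      rewrite !ln_mult; try lra; try nra. rewrite Hleps. unfold c1. lra.
    - assert (0 < a * eps) by nra. nra. }
  assert (Hlnhi : ln Q <= c2 - 2 * L + ln Y).
  { eapply Rle_trans; [apply ln_le'; [exact HQ|exact Hhi']|].
    rewrite !ln_mult; try nra. rewrite Hleps. unfold c2. lra. }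
  assert (HY2 : Y <= (A + K2) * L).
  { unfold Y, A. rewrite Hleps. pose proof (Rabs_pos (ln tau)).
    assert (- ln tau <= Rabs (ln tau)) by (rewrite <- Rabs_Ropp; apply Rle_abs).
    assert (K2 * (- (ln tau - L)) <= K2 * Rabs (ln tau) + K2 * L) by nra.
    assert (0 <= (K1 + K2 * Rabs (ln tau)) * (L - 1)) by (apply Rmult_le_pos; nra).
    nra. }
  assert (HL2 : 16 * (A + K2) / (e * e) < L).
  { eapply Rle_lt_trans; [|exact HLL]. unfold Lmin. eapply Rle_trans; [apply Rmax_l|apply Rmax_r]. }
  assert (HL3 : 2 * Rabs c1 / e < L).
  { eapply Rle_lt_trans; [|exact HLL]. unfold Lmin.
    eapply Rle_trans; [|apply Rmax_r]. eapply Rle_trans; [|apply Rmax_r]. apply Rmax_l. }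
  assert (HL4 : 2 * Rabs c2 / e < L).
  { eapply Rle_lt_trans; [|exact HLL]. unfold Lmin.
    eapply Rle_trans; [|apply Rmax_r]. eapply Rle_trans; [|apply Rmax_r]. apply Rmax_r. }
  assert (HY3 : Y < (e * L / 4) ^ 2).
  { assert (16 * (A + K2) < e * e * L).
    { apply Rmult_lt_reg_r with (/ (e * e)). apply Rinv_0_lt_compat; nra.
      replace (e * e * L * / (e * e)) with L by (field; lra). unfold Rdiv in HL2. lra. }
    assert ((A + K2) * L < e * e * L * L / 16) by nra. nra. }
  assert (HlnY : ln Y < e * L / 2).
  { pose proof (ln_lt_2sqrt Y HY).
    assert (sqrt Y < e * L / 4).
    { rewrite <- (sqrt_pow2 (e * L / 4)) by nra. apply sqrt_lt_1; [lra|nra|auto]. }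
    lra. }
  assert (Hc1 : Rabs c1 < e * L / 2).
  { apply Rmult_lt_reg_r with (2 / e). apply Rdiv_lt_0_compat; lra.
    replace (e * L / 2 * (2 / e)) with L by (field; lra). unfold Rdiv in *. lra. }
  assert (Hc2 : Rabs c2 < e * L / 2).
  { apply Rmult_lt_reg_r with (2 / e). apply Rdiv_lt_0_compat; lra.
    replace (e * L / 2 * (2 / e)) with L by (field; lra). unfold Rdiv in *. lra. }
  apply Rabs_def2 in Hc1. apply Rabs_def2 in Hc2.
  replace (- (ln Q / L) - 2) with (- ((ln Q + 2 * L) / L)) by (field; lra).
  rewrite Rabs_Ropp. unfold Rdiv. rewrite Rabs_mult, Rabs_inv, (Rabs_right L) by lra.
  apply Rmult_lt_reg_r with L; [lra|]. rewrite Rmult_assoc, Rinv_l, Rmult_1_r by lra.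
  apply Rabs_def1; lra.
Qed.
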